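(* Let $m$ and $n$ be relatively prime positive integers, and let $(\mathfrak{p}^{(i)}: 0 \le i \le m-1)$ and $(\mathfrak{q}^{(j)}: 0 \le j \le n-1)$ be Smith vectors for $m$ and $n$ respectively. Then, in the group $G(mn)$: (1) for all $i,j$, the order of $\overline{\Psi}_{mn}\big(\mathfrak{p}^{(i)}(\overline{t}^n)\mathfrak{q}^{(j)}(\overline{t}^m)\big)$ is $e_m(i)e_n(j)$; (2) if $\overline{\Psi}_{mn}(\mathfrak{p}^{(i_1)}(\overline{t}^n)\mathfrak{q}^{(j_1)}(\overline{t}^m))$ and $\overline{\Psi}_{mn}(\mathfrak{p}^{(i_2)}(\overline{t}^n)\mathfrak{q}^{(j_2)}(\overline{t}^m))$ are non-zero, then the intersection of the cyclic subgroups they generate is non-trivial if and only if $i_1 = i_2$ and $j_1 = j_2$.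
   Context: For a positive integer $k$, let $\Phi_d$ be the $d$th cyclotomic polynomial and $\Psi_k : \mathbf{Z}[X]/(X^k-1) \to \bigoplus_{d \mid k} \mathbf{Z}[X]/(\Phi_d(X))$ the natural map; $G(k)$ is its cokernel and $\overline{\Psi}_k$ the quotient map $\bigoplus_{d\mid k}\mathbf{Z}[X]/(\Phi_d(X)) \to G(k)$. $A_k$ is the matrix of $\Psi_k$ with respect to the bases $(1,\dots,\overline{X}^{k-1})$ and $(1,\dots,\overline{X}^{\phi(d)-1})$ (summands ordered by increasing $d$), and $e_k(0)\mid\dots\mid e_k(k-1)$ are its (non-negative) elementary divisors. A Smith vector for $k$ is a tuple $(\mathfrak{p}^{(j)}: 0\le j\le k-1)$ in $\bigoplus_{d\mid k}\mathbf{Z}[X]/(\Phi_d(X))$ forming a $\mathbf{Z}$-basis such that for every integer $a$, $a\mathfrak{p}^{(j)} \in \operatorname{Im}\Psi_k$ iff $e_k(j)\mid a$. Writing $\mathfrak{p}^{(i)} = \bigoplus_{d_1\mid m}\mathfrak{p}^{(i)}_{d_1}$ and $\mathfrak{q}^{(j)} = \bigoplus_{d_2\mid n}\mathfrak{q}^{(j)}_{d_2}$, the element $\mathfrak{p}^{(i)}(\overline{t}^n)\mathfrak{q}^{(j)}(\overline{t}^m)$ means $\bigoplus_{d_1\mid m,\ d_2\mid n}\mathfrak{p}^{(i)}_{d_1}(t^n)\mathfrak{q}^{(j)}_{d_2}(t^m) \bmod \Phi_{d_1d_2}(t)$, an element of $\bigoplus_{d\mid mn}\mathbf{Z}[t]/(\Phi_d(t))$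 (each $d\mid mn$ being uniquely $d_1d_2$ with $d_1\mid m$, $d_2\mid n$). *)

(* Defs.v *)
From HB Require Import structures.
From mathcomp Require Import all_boot all_order all_algebra.
From mathcomp Require Import cyclotomic.
Set Implicit Arguments. Unset Strict Implicit. Unset Printing Implicit Defensive.
Import Order.TTheory GRing.Theory Num.Theory.
Local Open Scope ring_scope.

(* An element of  (+)_{d | k} Z[X]/(Phi_d(X))  is represented by a family of
   integer polynomials x d (a representative of the d-th component); only the
   components with d | k matter, and only modulo Phi_d. *)
Definition elt := nat -> {poly int}.

Definition congPhi (d : nat) (a b : {poly int}) : Prop :=
  exists r : {poly int}, a - b = r * 'Phi_d.

Definition elt_scale (a : int) (x : elt) : elt := fun d => a%:P * x d.
Definition elt_sub (x y : elt) : elt := fun d => x d - y d.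

Definition inImPsi (k : nat) (x : elt) : Prop :=
  exists p : {poly int}, forall d : nat, (d %| k)%N -> congPhi d (x d) p.

Definition elt_eq (k : nat) (x y : elt) : Prop :=
  forall d : nat, (d %| k)%N -> congPhi d (x d) (y d).

Definition elt_comb (k : nat) (c : 'I_k -> int) (v : 'I_k -> elt) : elt :=
  fun d => \sum_(j < k) (c j)%:P * v j d.

Definition is_Z_basis (k : nat) (v : 'I_k -> elt) : Prop :=
  (forall x : elt, exists c : 'I_k -> int, elt_eq k x (elt_comb c v)) /\
  (forall c : 'I_k -> int, elt_eq k (elt_comb c v) (fun _ => 0) ->
     forall j, c j = 0).

(* Index of the target basis: row r corresponds to the basis element
   X^i of the summand Z[X]/(Phi_d), summands ordered by increasing d
   (divisors k is sorted increasingly), i < phi(d). *)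
Fixpoint locate_index (s : seq nat) (r : nat) : nat * nat :=
  match s with
  | [::] => (0%N, 0%N)
  | d :: s' => if (r < totient d)%N then (d, r) else locate_index s' (r - totient d)
  end.

(* The matrix A_k of Psi_k: column j is the image of X^j, row (d,i) its
   coefficient on X^i in Z[X]/(Phi_d). *)
Definition A_mat (k : nat) : 'M[int]_k :=
  \matrix_(r < k, j < k)
     let: (d, i) := locate_index (divisors k) r in (modp 'X^j 'Phi_d)`_i.

Definition elem_div (k : nat) (j : nat) : nat :=
  let: existT2 _ _ (existT2 _ _ (exist2 d _ _)) :=
    int_Smith_normal_form (A_mat k) in absz (nth (0 : int) d j).

Definition smith_vector (k : nat) (v : 'I_k -> elt) : Prop :=
  is_Z_basis v /\
  forall (j : 'I_k) (a : int),
    inImPsi k (elt_scale a (v j)) <-> ((elem_div k j)%:Z %| a)%Z.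

(* p(t^n) q(t^m) in (+)_{d | mn} Z[t]/(Phi_d(t)), d = d1 d2 with
   d1 = gcd(d,m), d2 = gcd(d,n) (m, n coprime). *)
Definition elt_prod (m n : nat) (p q : elt) : elt :=
  fun d => (p (gcdn d m) \Po 'X^n) * (q (gcdn d n) \Po 'X^m).

(* the image of x in G(k) = coker Psi_k has order a
   (the annihilator of the image is aZ). *)
Definition has_order_in_G (k : nat) (x : elt) (a : nat) : Prop :=
  forall b : int, inImPsi k (elt_scale b x) <-> (a%:Z %| b)%Z.

Definition cyclic_inter_nontrivial (k : nat) (x y : elt) : Prop :=
  exists a b : int,
    inImPsi k (elt_sub (elt_scale a x) (elt_scale b y)) /\
    ~ inImPsi k (elt_scale a x).

(* Main.v *)
Require Import Defs.
From HB Require Import structures.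
From mathcomp Require Import all_boot all_order all_algebra all_field.
From mathcomp Require Import ring zify.
Set Implicit Arguments. Unset Strict Implicit. Unset Printing Implicit Defensive.
Import Order.TTheory GRing.Theory Num.Theory.
Local Open Scope ring_scope.


Lemma Phi_lc d : lead_coef 'Phi_d \is a GRing.unit.
Proof. by rewrite (monicP (Cyclotomic_monic d)) unitr1. Qed.

Lemma Phi_neq0 d : 'Phi_d != 0.
Proof. exact: monic_neq0 (Cyclotomic_monic d). Qed.

Lemma cP_refl d a : congPhi d a a.
Proof. by exists 0; rewrite subrr mul0r. Qed.

Lemma cP_sym d a b : congPhi d a b -> congPhi d b a.
Proof. by case=> r H; exists (- r); rewrite -opprB H mulNr. Qed.

Lemma cP_trans d a b c : congPhi d a b -> congPhi d b c -> congPhi d a c.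
Proof.
case=> r H [s H']; exists (r + s).
by rewrite mulrDl -H -H' addrA subrK.
Qed.

Lemma cP_add d a b c e : congPhi d a b -> congPhi d c e -> congPhi d (a + c) (b + e).
Proof.
case=> r H [s H']; exists (r + s).
by rewrite mulrDl -H -H' opprD addrACA.
Qed.

Lemma cP_opp d a b : congPhi d a b -> congPhi d (- a) (- b).
Proof. by case=> r H; exists (- r); rewrite -opprD H mulNr. Qed.

Lemma cP_mull d c a b : congPhi d a b -> congPhi d (c * a) (c * b).
Proof. by case=> r H; exists (c * r); rewrite -mulrBr H mulrA. Qed.

Lemma cP_mulr d c a b : congPhi d a b -> congPhi d (a * c) (b * c).
Proof. by move=> H; rewrite ![_ * c]mulrC; apply: cP_mull. Qed.

Lemma cP_mul d a b c e : congPhi d a b -> congPhi d c e -> congPhi d (a * c) (b * e).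
Proof.
move=> H1 H2; apply: cP_trans (cP_mulr c H1) _; exact: cP_mull.
Qed.

Lemma cP_sum d (I : Type) (s : seq I) (P : pred I) (F G : I -> {poly int}) :
  (forall i, P i -> congPhi d (F i) (G i)) ->
  congPhi d (\sum_(i <- s | P i) F i) (\sum_(i <- s | P i) G i).
Proof.
move=> H; elim: s => [|x s IH]; first by rewrite !big_nil; apply: cP_refl.
rewrite !big_cons; case: (boolP (P x)) => Px //.
exact: cP_add (H _ Px) IH.
Qed.

Lemma cP_mod d a : congPhi d a (a %% 'Phi_d).
Proof.
exists (a %/ 'Phi_d).
by rewrite {1}(Pdiv.IdomainUnit.divp_eq (Phi_lc d) a) addrK.
Qed.

Lemma cP_modE d a b : congPhi d a b <-> a %% 'Phi_d = b %% 'Phi_d.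
Proof.
split.
  case=> r H; have -> : a = b + r * 'Phi_d by rewrite -H addrC subrK.
  by rewrite (Pdiv.IdomainUnit.modpD (Phi_lc d)) modp_mull addr0.
move=> H; apply: cP_trans (cP_mod d a) _; rewrite H; apply: cP_sym; exact: cP_mod.
Qed.

Lemma cP_mulPhi d r : congPhi d (r * 'Phi_d) 0.
Proof. by exists r; rewrite subr0. Qed.

Lemma Phi_dvd_Xn d k : (0 < k)%N -> (d %| k)%N -> exists r, 'X^k - 1 = r * 'Phi_d.
Proof.
move=> k0 dk; rewrite -prod_Cyclotomic // (big_rem d) -?dvdn_divisors //.
by exists (\prod_(j <- rem d (divisors k)) 'Phi_j); rewrite mulrC.
Qed.

Lemma XnE d K N : (0 < K)%N -> (d %| K)%N -> congPhi d 'X^N 'X^(N %% K).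
Proof.
move=> K0 dK; have [r Hr] := Phi_dvd_Xn K0 dK.
exists ('X^(N %% K) * (\sum_(i < N %/ K) ('X^K) ^+ i) * r).
have E : 'X^N = ('X^K) ^+ (N %/ K) * 'X^(N %% K) :> {poly int}.
  by rewrite -exprM -exprD mulnC -divn_eq.
rewrite E -{2}['X^(N %% K)]mul1r -mulrBl subrX1 Hr.
ring.
Qed.

Lemma monic_rat_dvd (a b : {poly int}) : b \is monic ->
  (map_poly intr b : {poly rat}) %| map_poly intr a -> exists r, a = r * b.
Proof.
move=> mb H.
have lcb : lead_coef b \is a GRing.unit by rewrite (monicP mb) unitr1.
have Hd := Pdiv.IdomainUnit.divp_eq lcb a.
exists (a %/ b); suff H0 : a %% b = 0 by rewrite {1}Hd H0 addr0.
have inj : injective (intr : int -> rat) := @intr_inj _.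
have Hr : map_poly (intr : int -> rat) (a %% b) = 0.
  move: H; rewrite {1}Hd rmorphD rmorphM /= dvdp_addr ?dvdp_mull // => H.
  apply/eqP; apply: contraTT H => nz; apply/negP => /(dvdp_leq nz).
  by rewrite !size_map_inj_poly // leqNgt ltn_modp monic_neq0.
apply: (map_inj_poly inj (rmorph0 _)); by rewrite Hr map_poly0.
Qed.


Lemma Phi_comp m n d1 d2 : (0 < m)%N -> (0 < n)%N -> coprime m n ->
  (d1 %| m)%N -> (d2 %| n)%N ->
  exists r, 'Phi_d1 \Po 'X^n = r * 'Phi_(d1 * d2).
Proof.
move=> m0 n0 cop d1m d2n.
have d1p : (0 < d1)%N := dvdn_gt0 m0 d1m.
have d2p : (0 < d2)%N := dvdn_gt0 n0 d2n.
have Dp : (0 < d1 * d2)%N by rewrite muln_gt0 d1p.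
have [w pw] := C_prim_root_exists Dp.
have g : gcdn n (d1 * d2) = d2.
  rewrite mulnC Gauss_gcdl; first exact/gcdn_idPr.
  rewrite coprime_sym; exact: coprime_dvdl d1m cop.
have pw' : d1.-primitive_root (w ^+ n).
  by have := exp_prim_root pw n; rewrite g mulnK.
apply: monic_rat_dvd; first exact: Cyclotomic_monic.
have [pm [Hm mpm] Hdv] := minCpolyP w.
have E1 : map_poly (intr : int -> algC) 'Phi_(d1 * d2) = map_poly ratr pm.
  by rewrite -Hm (minCpoly_cyclotomic pw) (Cintr_Cyclotomic pw).
have cmp (c : {poly int}) : map_poly ratr (map_poly (intr : int -> rat) c)
    = map_poly (intr : int -> algC) c.
  rewrite -map_poly_comp; apply: eq_map_poly => z /=; exact: ratr_int.
have -> : map_poly (intr : int -> rat) 'Phi_(d1 * d2) = pm.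
  apply: (map_inj_poly (fmorph_inj (ratr : {rmorphism rat -> algC})) (rmorph0 _)).
  by rewrite cmp E1.
rewrite -Hdv cmp map_comp_poly map_polyXn /root horner_comp hornerXn.
rewrite (Cintr_Cyclotomic pw').
by have := root_cyclotomic pw' (w ^+ n); rewrite pw'.
Qed.

Definition tot (s : seq nat) := (\sum_(d <- s) totient d)%N.

Lemma loc_in s r : (r < tot s)%N ->
  ((locate_index s r).1 \in s) && ((locate_index s r).2 < totient (locate_index s r).1)%N.
Proof.
elim: s r => [|d s IH] r; first by rewrite /tot big_nil.
rewrite /tot big_cons /= => Hr; case: ifP => H; first by rewrite /= inE eqxx.
have /IH/andP[H1 H2] : (r - totient d < tot s)%N.
  by rewrite /tot ltn_subLR // leqNgt H.
by rewrite inE H1 orbT.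
Qed.

Lemma loc_inj s r1 r2 : uniq s -> (r1 < tot s)%N -> (r2 < tot s)%N ->
  locate_index s r1 = locate_index s r2 -> r1 = r2.
Proof.
elim: s r1 r2 => [|d s IH] r1 r2; first by rewrite /tot big_nil.
rewrite /tot big_cons /= => /andP[ds us] H1 H2.
have aux r : (r < totient d + tot s)%N -> (r < totient d)%N = false ->
    (locate_index s (r - totient d)).1 \in s.
  move=> Hr Hf; have /loc_in/andP[] // : (r - totient d < tot s)%N.
  by rewrite ltn_subLR // leqNgt Hf.
case: ifP => h1; case: ifP => h2.
- by case.
- move=> E; move: (aux _ H2 h2); rewrite -E /=; by rewrite (negPf ds).
- move=> E; move: (aux _ H1 h1); rewrite E /=; by rewrite (negPf ds).
- move=> /(IH _ _ us) E.
  have a1 := aux _ H1 h1; have a2 := aux _ H2 h2.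
  have : (r1 - totient d = r2 - totient d)%N.
    apply: E; rewrite /tot ltn_subLR // leqNgt ?h1 ?h2 //.
  by move/(congr1 (addn (totient d))); rewrite !subnKC // leqNgt ?h1 ?h2.
Qed.

Lemma loc_surj s d i : d \in s -> (i < totient d)%N ->
  exists2 r, (r < tot s)%N & locate_index s r = (d, i).
Proof.
elim: s => [|d' s IH] //; rewrite inE => /orP[/eqP-> | ds] Hi.
  by exists i; [rewrite /tot big_cons ltn_addr | rewrite /= Hi].
have [r Hr E] := IH ds Hi.
exists (r + totient d'); first by rewrite /tot big_cons addnC ltn_add2r.
by rewrite /= ltnNge leq_addl /= addnK.
Qed.

Lemma size_prod_Phi s : size (\prod_(d <- s) 'Phi_d) = (tot s).+1.
Proof.
elim: s => [|d s IH]; first by rewrite /tot big_nil big_nil size_poly1.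
rewrite big_cons size_mul ?Phi_neq0 //; last first.
  by rewrite -size_poly_eq0 IH.
by rewrite IH size_Cyclotomic /tot big_cons addSn addnS.
Qed.

Lemma tot_div k : (0 < k)%N -> tot (divisors k) = k.
Proof.
move=> k0; have := size_prod_Phi (divisors k).
by rewrite prod_Cyclotomic // size_Xn_sub_1 // => [[]].
Qed.

Definition loc k r := locate_index (divisors k) r.

Lemma loc_spec k (r : nat) : (0 < k)%N -> (r < k)%N ->
  ((loc k r).1 %| k)%N /\ ((loc k r).2 < totient (loc k r).1)%N.
Proof.
move=> k0 rk; rewrite -(tot_div k0) in rk.
by have /andP[H1 H2] := loc_in rk; rewrite dvdn_divisors.
Qed.

Lemma loc_injk k (r1 r2 : 'I_k) : loc k r1 = loc k r2 -> r1 = r2.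
Proof.
move=> E; have k0 : (0 < k)%N by case: k r1 {E r2} => [[]|].
apply: val_inj; apply: (loc_inj (divisors_uniq k)) E; by rewrite tot_div.
Qed.

Lemma loc_surjk k d i : (0 < k)%N -> (d %| k)%N -> (i < totient d)%N ->
  exists r : 'I_k, loc k r = (d, i).
Proof.
move=> k0 dk Hi; rewrite dvdn_divisors // in dk.
have [r Hr E] := loc_surj dk Hi; rewrite tot_div // in Hr.
by exists (Ordinal Hr).
Qed.

Definition coord k (x : elt) : 'cV[int]_k :=
  \col_(r < k) (x (loc k r).1 %% 'Phi_(loc k r).1)`_(loc k r).2.

Definition eadd (x y : elt) : elt := fun d => x d + y d.
Definition econst (P : {poly int}) : elt := fun _ => P.
Definition ezero : elt := fun _ => 0.

Lemma coord_ext k x y : (forall d, x d = y d) -> coord k x = coord k y.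
Proof. by move=> H; apply/matrixP => r j; rewrite !mxE H. Qed.

Lemma coord_add k x y : coord k (eadd x y) = coord k x + coord k y.
Proof.
by apply/matrixP => r j; rewrite !mxE (Pdiv.IdomainUnit.modpD (Phi_lc _)) coefD.
Qed.

Lemma coord_scale k a x : coord k (elt_scale a x) = a *: coord k x.
Proof.
apply/matrixP => r j; rewrite !mxE /elt_scale mul_polyC.
by rewrite (Pdiv.IdomainUnit.modpZl (Phi_lc _)) coefZ.
Qed.

Lemma coord_zero k : coord k ezero = 0.
Proof. by apply/matrixP => r j; rewrite !mxE mod0p coef0. Qed.

Lemma coord_sum k (I : Type) (s : seq I) (F : I -> elt) :
  coord k (fun d => \sum_(i <- s) F i d) = \sum_(i <- s) coord k (F i).
Proof.
elim: s => [|a s IH].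
  rewrite big_nil; rewrite -(coord_zero k); apply: coord_ext => d; by rewrite big_nil.
rewrite big_cons -IH -coord_add; apply: coord_ext => d.
by rewrite big_cons.
Qed.

Lemma coord_comb k K (c : 'I_K -> int) (v : 'I_K -> elt) :
  coord k (elt_comb c v) = \sum_j c j *: coord k (v j).
Proof.
rewrite /elt_comb coord_sum; apply: eq_bigr => j _.
by rewrite -coord_scale.
Qed.

Lemma coord_eq k x y : elt_eq k x y -> coord k x = coord k y.
Proof.
move=> H; have k0 : (0 < k)%N \/ k = 0%N by case: k {H} => [|k]; [right|left].
apply/matrixP => r j; rewrite !mxE.
have k0' : (0 < k)%N by case: k r {H k0} => [[]|].
have [dk _] := loc_spec k0' (ltn_ord r).
by have /cP_modE -> := H _ dk.
Qed.

Lemma coord_inj k x y : (0 < k)%N -> coord k x = coord k y -> elt_eq k x y.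
Proof.
move=> k0 E d dk; apply/cP_modE/polyP => i.
have [Hi | Hi] := ltnP i (totient d).
  have [r Hr] := loc_surjk k0 dk Hi.
  have := congr1 (fun M : 'cV_k => M r 0) E; rewrite /= !mxE Hr /=.
  done.
have sz (z : {poly int}) : (size (modp z 'Phi_d) <= i)%N.
  by have := ltn_modp z 'Phi_d; rewrite Phi_neq0 size_Cyclotomic ltnS => /leq_trans; apply.
by rewrite !nth_default ?sz.
Qed.

Definition eps k (r : nat) : elt :=
  fun d => if (loc k r).1 == d then 'X^((loc k r).2) else 0.

Definition delta_col k (r : 'I_k) : 'cV[int]_k := \col_(r' < k) ((r' == r)%:R).

Lemma coord_eps k (r : 'I_k) : coord k (eps k r) = delta_col r.
Proof.
have k0 : (0 < k)%N by case: k r => [[]|].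
apply/matrixP => r' j; rewrite !mxE /eps.
have [_ Hi] := loc_spec k0 (ltn_ord r).
case: eqP => E.
  rewrite -E modp_small ?size_polyXn ?size_Cyclotomic ?ltnS // coefXn.
  have -> : ((loc k r').2 == (loc k r).2) = (r' == r) => //.
  apply/eqP/eqP => [E2|->//]; apply: loc_injk.
  by rewrite [loc k r]surjective_pairing [loc k r']surjective_pairing E E2.
by rewrite mod0p coef0; case: eqP => // E3; case: E; rewrite E3.
Qed.

Definition vec k (v : 'cV[int]_k) : elt := elt_comb (fun r => v r 0) (fun r : 'I_k => eps k r).

Lemma coord_vec k v : coord k (vec v) = v.
Proof.
rewrite /vec coord_comb; apply/matrixP => r j; rewrite (ord1 j) summxE.
under eq_bigr do rewrite coord_eps !mxE.
rewrite (bigD1 r) //= eqxx mulr1 big1 ?addr0 // => i ir.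
by rewrite eq_sym (negPf ir) mulr0.
Qed.

Lemma vec_coord k x : (0 < k)%N -> elt_eq k x (vec (coord k x)).
Proof. by move=> k0; apply: coord_inj => //; rewrite coord_vec. Qed.

Lemma ee_refl k x : elt_eq k x x.
Proof. by move=> d _; apply: cP_refl. Qed.

Lemma ee_sym k x y : elt_eq k x y -> elt_eq k y x.
Proof. by move=> H d dk; apply: cP_sym; apply: H. Qed.

Lemma ee_trans k x y z : elt_eq k x y -> elt_eq k y z -> elt_eq k x z.
Proof. by move=> H1 H2 d dk; apply: cP_trans (H1 d dk) (H2 d dk). Qed.

Lemma inIm_congr k x y : elt_eq k x y -> inImPsi k x -> inImPsi k y.
Proof.
move=> H [P HP]; exists P => d dk; apply: cP_trans (cP_sym (H d dk)) (HP d dk).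
Qed.

Lemma A_entry k (r j : 'I_k) : A_mat k r j = coord k (econst 'X^j) r 0.
Proof. by rewrite !mxE /loc /econst; case: (locate_index (divisors k) r) => a b. Qed.

Lemma A_col k (w : 'cV_k) :
  A_mat k *m w = coord k (econst (\sum_(j < k) (w j 0)%:P * 'X^j)).
Proof.
have -> : coord k (econst (\sum_(j < k) (w j 0)%:P * 'X^j))
    = coord k (elt_comb (fun j => w j 0) (fun j : 'I_k => econst 'X^j)).
  by apply: coord_ext => d.
rewrite coord_comb; apply/matrixP => r i; rewrite (ord1 i) !mxE summxE.
by apply: eq_bigr => j _; rewrite A_entry !mxE mulrC.
Qed.

Lemma A_delta k (j : 'I_k) : A_mat k *m delta_col j = coord k (econst 'X^j).
Proof.
apply/matrixP => r i; rewrite (ord1 i) [in LHS]mxE (bigD1 j) //= big1 ?addr0.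
  by rewrite [delta_col _ _ _]mxE eqxx mulr1 A_entry.
move=> j' jj; by rewrite [delta_col _ _ _]mxE (negPf jj) mulr0.
Qed.

Lemma coordX_inA k N (k0 : (0 < k)%N) :
  coord k (econst 'X^N) = A_mat k *m delta_col (Ordinal (ltn_pmod N k0)).
Proof.
rewrite A_delta; apply: coord_eq => d dk /=; exact: XnE.
Qed.

Lemma poly_expand (P : {poly int}) : P = \sum_(i < size P) (P`_i)%:P * 'X^i.
Proof.
rewrite -{1}(coefK P) poly_def; apply: eq_bigr => i _; by rewrite mul_polyC.
Qed.

Lemma imP k x : (0 < k)%N -> inImPsi k x <-> exists w, coord k x = A_mat k *m w.
Proof.
move=> k0; split.
  case=> P HP.
  have -> : coord k x = coord k (econst P) by apply: coord_eq.
  rewrite [P]poly_expand.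
  have -> : coord k (econst (\sum_(i < size P) (P`_i)%:P * 'X^i))
     = coord k (elt_comb (fun i => P`_i) (fun i : 'I_(size P) => econst 'X^i)).
    by apply: coord_ext => d.
  rewrite coord_comb.
  exists (\sum_(i < size P) P`_i *: delta_col (Ordinal (ltn_pmod i k0))).
  rewrite mulmx_sumr; apply: eq_bigr => i _; by rewrite coordX_inA scalemxAr.
case=> w E; rewrite A_col in E; move/(coord_inj k0): E => E.
by exists (\sum_(j < k) (w j 0)%:P * 'X^j).
Qed.

Local Notation ZQ := (intr : int -> rat).

Lemma crt_poly k d : (0 < k)%N -> (d %| k)%N ->
  exists2 N : int, N != 0 & exists P, congPhi d P N%:P /\
     forall d', (d' %| k)%N -> d' != d -> congPhi d' P 0.
Proof.
move=> k0 dk; rewrite dvdn_divisors // in dk.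
set F := \prod_(j <- rem d (divisors k)) 'Phi_j.
have EF : 'X^k - 1 = 'Phi_d * F by rewrite -prod_Cyclotomic // (big_rem d).
have sep : separable_poly ('X^k - 1 : {poly rat}).
  by apply: separable_Xn_sub_1; rewrite pnatr_eq0 -lt0n.
have cop : coprimep (map_poly ZQ 'Phi_d) (map_poly ZQ F).
  apply: (separable_coprime sep); rewrite -rmorphM -EF rmorphB rmorph1 /=.
  by rewrite map_polyXn dvdpp.
have [[u v] /= Huv] := Bezout_eq1_coprimepP _ _ cop.
have [qu [au au0 Hu]] := rat_poly_scale u.
have [qv [av av0 Hv]] := rat_poly_scale v.
have Hu' : map_poly ZQ qu = (au%:~R)%:P * u.
  by rewrite Hu -mul_polyC mulrA -polyCM mulfV ?intr_eq0 // mul1r.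
have Hv' : map_poly ZQ qv = (av%:~R)%:P * v.
  by rewrite Hv -mul_polyC mulrA -polyCM mulfV ?intr_eq0 // mul1r.
have key : (av%:P * qu) * 'Phi_d + (au%:P * qv) * F = (au * av)%:P.
  apply: (map_inj_poly (intr_inj : injective ZQ) (rmorph0 _)).
  rewrite rmorphD !rmorphM /= !map_polyC /= Hu' Hv'.
  transitivity ((au%:~R)%:P * (av%:~R)%:P *
     (u * map_poly ZQ 'Phi_d + v * map_poly ZQ F)); first ring.
  by rewrite Huv mulr1.
exists (au * av); first by rewrite mulf_neq0.
exists ((au%:P * qv) * F); split.
  by exists (- (av%:P * qu)); rewrite -key; ring.
move=> d' d'k d'd; rewrite dvdn_divisors // in d'k.
have d'F : d' \in rem d (divisors k) by rewrite mem_rem_uniq ?divisors_uniq // inE d'd.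
exists (au%:P * qv * \prod_(j <- rem d' (rem d (divisors k))) 'Phi_j).
by rewrite subr0 /F (big_rem d') //=; ring.
Qed.

Lemma N_delta k (r : 'I_k) :
  exists2 N : int, N != 0 & exists w, A_mat k *m w = N *: delta_col r.
Proof.
have k0 : (0 < k)%N by case: k r => [[]|].
have [dk Hi] := loc_spec k0 (ltn_ord r).
have [N N0 [P [HP1 HP2]]] := crt_poly k0 dk.
exists N => //.
have Him : inImPsi k (econst (P * 'X^((loc k r).2))).
  by exists (P * 'X^((loc k r).2)) => d _; apply: cP_refl.
have [w Hw] := (imP _ k0).1 Him; exists w; rewrite -Hw -coord_eps -coord_scale.
apply: coord_eq => d' d'k; rewrite /econst /elt_scale /eps.
case: eqP => E.
  by rewrite -E; apply: cP_mulr.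
rewrite mulr0; have := HP2 d' d'k; rewrite eq_sym; move/eqP: E => /[swap] /[apply].
by move/(cP_mulr 'X^((loc k r).2)); rewrite mul0r.
Qed.

Lemma detA_neq0 k : (0 < k)%N -> \det (A_mat k) != 0.
Proof.
move=> k0.
have H r : exists Nw : int * 'cV[int]_k, (Nw.1 != 0) /\ A_mat k *m Nw.2 = Nw.1 *: delta_col r.
  by have [N N0 [w Hw]] := N_delta r; exists (N, w).
have [f Hf] := fin_all_exists H.
pose W : 'M[int]_k := \matrix_(i, r) (f r).2 i 0.
have AW : A_mat k *m W = diag_mx (\row_r (f r).1).
  apply/matrixP => i r; have [_ E] := Hf r.
  have := congr1 (fun M : 'cV_k => M i 0) E.
  rewrite /= !mxE mulr_natr.
  have -> : (f i).1 *+ (i == r) = (f r).1 *+ (i == r) by case: eqP => [->|].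
  move=> <-; apply: eq_bigr => j _; by rewrite !mxE.
have := congr1 determinant AW; rewrite det_mulmx det_diag => E.
apply/negP => /eqP D0; move: E; rewrite D0 mul0r => /esym/eqP.
rewrite prodf_seq_eq0 => /hasP[r _]; rewrite mxE; have [Hr _] := Hf r; by rewrite (negPf Hr).
Qed.

Lemma smith_data k : exists (L R : 'M[int]_k) (d : seq int),
  [/\ L \in unitmx, R \in unitmx,
      A_mat k = L *m diag_mx (\row_i d`_i) *m R &
      forall j, elem_div k j = absz (d`_j)].
Proof.
rewrite /elem_div; case: int_Smith_normal_form => L uL [R uR [d _ E]].
exists L, R, d; split => //; rewrite E; congr (_ *m _ *m _).
by apply/matrixP => i j; rewrite !mxE.
Qed.

Lemma colmul k (M : 'M[int]_k) (f : 'I_k -> 'cV[int]_k) i j :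
  (M *m \matrix_(l, j) (f j) l 0) i j = (M *m f j) i 0.
Proof. by rewrite !mxE; apply: eq_bigr => l _; rewrite mxE. Qed.

Definition Pmat k (p : 'I_k -> elt) : 'M[int]_k := \matrix_(r, j) coord k (p j) r 0.

Lemma coord_combP k (p : 'I_k -> elt) (c : 'I_k -> int) :
  coord k (elt_comb c p) = Pmat p *m \col_j c j.
Proof.
rewrite coord_comb; apply/matrixP => i j; rewrite !mxE summxE.
by apply: eq_bigr => l _; rewrite !mxE mulrC.
Qed.

Lemma basis_unit k (p : 'I_k -> elt) : is_Z_basis p -> Pmat p \in unitmx.
Proof.
move=> [Hs _].
have k0 : (0 < k)%N \/ k = 0%N by case: k p {Hs} => [|k]; [right|left].
have H (r : 'I_k) : exists c : 'I_k -> int, elt_eq k (eps k r) (elt_comb c p) := Hs _.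
have [f Hf] := fin_all_exists H.
have: Pmat p *m \matrix_(l, r) (\col_j f r j) l 0 = 1%:M.
  apply/matrixP => i r; rewrite colmul -coord_combP.
  have k1 : (0 < k)%N by case: k0 => // k0; move: r; rewrite k0 => -[].
  by rewrite -(coord_eq (Hf r)) coord_eps !mxE.
by case/mulmx1_unit.
Qed.

Lemma sgz_unit (a : int) : a != 0 -> sgz a \is a GRing.unit.
Proof.
move=> a0; case: (sgzP a) a0 => //= _ _; by rewrite ?unitr1 ?unitrN1.
Qed.

Lemma F3 k (p : 'I_k -> elt) : (0 < k)%N -> smith_vector p -> forall x, inImPsi k x ->
  exists c : 'I_k -> int, elt_eq k x (elt_comb (fun j => (elem_div k j)%:Z * c j) p).
Proof.
move=> k0 [Hb Hsm] x Hx.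
have [L [R [d [uL uR EA Ed]]]] := smith_data k.
pose D : 'M[int]_k := diag_mx (\row_i d`_i).
have dnz (i : 'I_k) : d`_i != 0.
  apply/negP => /eqP di; move: (detA_neq0 k0); rewrite EA !det_mulmx det_diag.
  by rewrite (bigD1 i) //= mxE di !mul0r !mulr0 !mul0r.
pose S : 'M[int]_k := diag_mx (\row_i sgz d`_i).
pose E : 'M[int]_k := diag_mx (\row_i (elem_div k i)%:Z).
have EDS : E = D *m S.
  rewrite mulmx_diag; congr diag_mx; apply/matrixP => i j.
  by rewrite !mxE Ed abszEsg mulrC.
have Hw (j : 'I_k) : exists w, coord k (elt_scale (elem_div k j)%:Z (p j)) = A_mat k *m w.
  apply/(imP _ k0); apply/(Hsm j); exact: dvdzz.
have [wf Hwf] := fin_all_exists Hw.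
pose C : 'M[int]_k := \matrix_(l, j) (R *m wf j) l 0.
have PEC : Pmat p *m E = L *m D *m C.
  apply/matrixP => i j; rewrite colmul mulmxA -EA -Hwf (coord_scale k (elem_div k j) (p j)) mul_mx_diag.
  by rewrite !mxE mulrC.
pose T := invmx L *m Pmat p.
have uT : T \in unitmx by rewrite unitmx_mul unitmx_inv uL basis_unit.
have TDS : T *m D *m S = D *m C.
  by rewrite /T -!mulmxA -EDS PEC -!mulmxA mulKmx.
have uC : C \in unitmx.
  have := congr1 determinant TDS; rewrite !det_mulmx => Edet.
  have detD0 : \det D != 0.
    rewrite det_diag; apply/prodf_neq0 => i _; by rewrite mxE dnz.
  have : \det C = \det T * \det S.
    by apply: (mulfI detD0); rewrite -Edet /T det_mulmx; ring.
  rewrite unitmxE => ->; rewrite unitrM -!unitmxE uT unitmxE det_diag.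
  by apply/unitr_prod => i _; rewrite mxE sgz_unit.
have [w Hw'] := (imP x k0).1 Hx.
pose c' := invmx C *m (R *m w).
exists (fun j => c' j 0).
apply: coord_inj => //; rewrite Hw' coord_combP EA.
have -> : L *m D *m R *m w = L *m (D *m C) *m c'.
  by rewrite /c' -!mulmxA mulKVmx.
rewrite -TDS /T !mulmxA mulmxV // mul1mx -[Pmat p *m D *m S]mulmxA -EDS -mulmxA.
rewrite -!mulmxA -/c'; congr (_ *m _); apply/matrixP => i j; by rewrite (ord1 j) mul_diag_mx !mxE.
Qed.

Lemma gcd_split m n d : coprime m n -> (d %| m * n)%N -> (gcdn d m * gcdn d n)%N = d.
Proof.
move=> cop dmn; apply/eqP; rewrite eqn_dvd; apply/andP; split.
  rewrite Gauss_dvd ?dvdn_gcdl //.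
  apply: coprime_dvdl (dvdn_gcdr d m) _; rewrite coprime_sym.
  apply: coprime_dvdl (dvdn_gcdr d n) _; by rewrite coprime_sym.
by rewrite muln_gcdl !muln_gcdr !dvdn_gcd dmn !(dvdn_mulr _ (dvdnn d)) (dvdn_mull _ (dvdnn d)).
Qed.

Lemma gcd_d1 m n d1 d2 : coprime m n -> (d1 %| m)%N -> (d2 %| n)%N -> gcdn (d1 * d2) m = d1.
Proof.
move=> cop d1m d2n; rewrite gcdnC Gauss_gcdl; first exact/gcdn_idPr.
by apply: coprime_dvdr d2n cop.
Qed.

Lemma gcd_d2 m n d1 d2 : coprime m n -> (d1 %| m)%N -> (d2 %| n)%N -> gcdn (d1 * d2) n = d2.
Proof.
move=> cop d1m d2n; rewrite gcdnC Gauss_gcdr; first exact/gcdn_idPr.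
apply: coprime_dvdr d1m _; by rewrite coprime_sym.
Qed.

Lemma comp_cong m n d1 d2 a b : (0 < m)%N -> (0 < n)%N -> coprime m n ->
  (d1 %| m)%N -> (d2 %| n)%N -> congPhi d1 a b ->
  congPhi (d1 * d2) (a \Po 'X^n) (b \Po 'X^n).
Proof.
move=> m0 n0 cop d1m d2n [r Hr].
have [s Hs] := Phi_comp m0 n0 cop d1m d2n.
exists ((r \Po 'X^n) * s); by rewrite -comp_polyB Hr comp_polyM Hs mulrA.
Qed.

Lemma mu_congr m n x x' y y' : (0 < m)%N -> (0 < n)%N -> coprime m n ->
  elt_eq m x x' -> elt_eq n y y' ->
  elt_eq (m * n) (elt_prod m n x y) (elt_prod m n x' y').
Proof.
move=> m0 n0 cop Hx Hy d dmn; rewrite /elt_prod.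
have d1m := dvdn_gcdr d m; have d2n := dvdn_gcdr d n.
have E := gcd_split cop dmn.
set d1 := gcdn d m in d1m E *; set d2 := gcdn d n in d2n E *.
rewrite -E.
apply: cP_mul.
  exact: comp_cong m0 n0 cop d1m d2n (Hx _ d1m).
rewrite mulnC; apply: comp_cong n0 m0 _ d2n d1m (Hy _ d2n).
by rewrite coprime_sym.
Qed.

Lemma comp_comb K (c : 'I_K -> int) (f : 'I_K -> {poly int}) r :
  (\sum_i (c i)%:P * f i) \Po r = \sum_i (c i)%:P * (f i \Po r).
Proof.
elim/big_rec2: _ => [|i y1 y2 _ <-]; first by rewrite comp_poly0.
by rewrite comp_polyD comp_polyM comp_polyC.
Qed.

Definition mcomb m n (p : 'I_m -> elt) (q : 'I_n -> elt) (C : 'I_m -> 'I_n -> int) : elt :=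
  fun d => \sum_i \sum_j (C i j)%:P * elt_prod m n (p i) (q j) d.

Lemma prod_comb m n (p : 'I_m -> elt) (q : 'I_n -> elt) c g d :
  elt_prod m n (elt_comb c p) (elt_comb g q) d = mcomb p q (fun i j => c i * g j) d.
Proof.
rewrite /elt_prod /elt_comb /mcomb !comp_comb mulr_suml; apply: eq_bigr => i _.
rewrite mulr_sumr; apply: eq_bigr => j _; rewrite polyCM /elt_prod; ring.
Qed.

Lemma ee_ext k (x y : elt) : (forall d, x d = y d) -> elt_eq k x y.
Proof. by move=> H d _; rewrite H; apply: cP_refl. Qed.

Lemma ee_comb k K (c : 'I_K -> int) (F G : 'I_K -> elt) :
  (forall r, elt_eq k (F r) (G r)) -> elt_eq k (elt_comb c F) (elt_comb c G).
Proof.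
move=> H d dk; apply: cP_sum => r _; apply: cP_mull; exact: H.
Qed.

Lemma mcomb_ext m n (p : 'I_m -> elt) (q : 'I_n -> elt) C C' :
  (forall i j, C i j = C' i j) -> forall d, mcomb p q C d = mcomb p q C' d.
Proof.
move=> H d; apply: eq_bigr => i _; apply: eq_bigr => j _; by rewrite H.
Qed.

Lemma mcomb_lin m n (p : 'I_m -> elt) (q : 'I_n -> elt) K (c : 'I_K -> int) C d :
  elt_comb c (fun r => mcomb p q (C r)) d
  = mcomb p q (fun i j => \sum_r c r * C r i j) d.
Proof.
rewrite /elt_comb /mcomb.
under eq_bigr do rewrite mulr_sumr.
rewrite exchange_big; apply: eq_bigr => i _.
under eq_bigr do rewrite mulr_sumr.
rewrite exchange_big; apply: eq_bigr => j _.
rewrite rmorph_sum mulr_suml; apply: eq_bigr => r _.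
by rewrite /= polyCM mulrA.
Qed.

Lemma exp_mod m n i : (0 < m)%N -> (0 < n)%N -> coprime m n ->
  exists a b : nat, ((a * n + b * m) %% (m * n) = i %% (m * n))%N.
Proof.
move=> m0 n0 cop.
have [u u' Hu _] := @egcdnP n m n0.
have [v v' Hv _] := @egcdnP m n m0.
have g1 : gcdn m n = 1%N := eqP cop.
have g2 : gcdn n m = 1%N by rewrite gcdnC.
rewrite g2 in Hu; rewrite g1 in Hv.
exists (i * u), (i * v); apply/eqP.
rewrite chinese_remainder //; apply/andP; split.
  have -> : (i * u * n + i * v * m = (i * u' + i * v) * m + i)%N by nia.
  by rewrite modnMDl.
have -> : (i * u * n + i * v * m = (i * u + i * v') * n + i)%N.
  nia.
by rewrite modnMDl.
Qed.

Lemma Xcomp a n : ('X^a \Po 'X^n : {poly int}) = 'X^(a * n).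
Proof. by rewrite comp_Xn_poly -exprM mulnC. Qed.

Lemma eps_span m n (p : 'I_m -> elt) (q : 'I_n -> elt) : (0 < m)%N -> (0 < n)%N ->
  coprime m n -> is_Z_basis p -> is_Z_basis q -> forall r : 'I_(m * n),
  exists C, elt_eq (m * n) (eps (m * n) r) (mcomb p q C).
Proof.
move=> m0 n0 cop [Hp _] [Hq _] r.
have mn0 : (0 < m * n)%N by rewrite muln_gt0 m0.
have [dk _] := loc_spec mn0 (ltn_ord r).
set d := (loc (m * n) r).1 in dk *; set i0 := (loc (m * n) r).2.
have E := gcd_split cop dk.
set d1 := gcdn d m in E *; set d2 := gcdn d n in E *.
have [a [b Hab]] := exp_mod i0 m0 n0 cop.
pose al : elt := fun e => if e == d1 then 'X^a else 0.
pose be : elt := fun e => if e == d2 then 'X^b else 0.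
have [c Hc] := Hp al; have [g Hg] := Hq be.
exists (fun i j => c i * g j).
apply: (@ee_trans _ _ (elt_prod m n al be)); last first.
  apply: ee_trans (mu_congr m0 n0 cop Hc Hg) _; apply: ee_ext => e; exact: prod_comb.
move=> e ek; rewrite /eps /elt_prod /al /be -/d -/i0.
case: eqP => [<-|ne].
  rewrite -/d1 -/d2 !eqxx !Xcomp -exprD.
  apply: cP_trans (XnE i0 mn0 dk) _; rewrite -Hab; apply: cP_sym; exact: XnE.
case: eqP => e1; case: eqP => e2; try by exists 0; rewrite mul0r; ring.
  by case: ne; rewrite -(gcd_split cop ek) e1 e2.
Qed.

Lemma span_mn m n (p : 'I_m -> elt) (q : 'I_n -> elt) : (0 < m)%N -> (0 < n)%N ->
  coprime m n -> is_Z_basis p -> is_Z_basis q -> forall x,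
  exists C, elt_eq (m * n) x (mcomb p q C).
Proof.
move=> m0 n0 cop Hp Hq x.
have mn0 : (0 < m * n)%N by rewrite muln_gt0 m0.
have [Cf HC] := fin_all_exists (eps_span m0 n0 cop Hp Hq).
exists (fun i j => \sum_r coord (m * n) x r 0 * Cf r i j).
apply: ee_trans (vec_coord x mn0) _.
apply: ee_trans (ee_comb _ HC) _.
apply: ee_ext => d; exact: mcomb_lin.
Qed.

Definition unpair m n (s : 'I_(m * n)) : 'I_m * 'I_n :=
  enum_val (cast_ord (esym (mxvec_cast m n)) s).

Lemma unpairK m n (i : 'I_m) (j : 'I_n) : unpair (mxvec_index i j) = (i, j).
Proof. by rewrite /unpair /mxvec_index cast_ordK enum_rankK. Qed.

Lemma unpair_bij m n : bijective (@unpair m n).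
Proof.
exists (fun ij => mxvec_index ij.1 ij.2).
  move=> s; case: (mxvec_indexP s) => i j; by rewrite unpairK.
by case=> i j; rewrite unpairK.
Qed.

Lemma sum_pair m n K (F : 'I_m -> 'I_n -> 'cV[int]_K) :
  \sum_i \sum_j F i j = \sum_(s : 'I_(m * n)) F (unpair s).1 (unpair s).2.
Proof.
rewrite pair_big /=; apply: (reindex (@unpair m n)).
have [g g1 g2] := unpair_bij m n; by exists g => x _.
Qed.

Lemma coord_scale' k a (x : elt) : coord k (fun d => a%:P * x d) = a *: coord k x.
Proof. exact: coord_scale. Qed.

Definition Wmat m n (p : 'I_m -> elt) (q : 'I_n -> elt) : 'M[int]_(m * n) :=
  \matrix_(r, s) coord (m * n) (elt_prod m n (p (unpair s).1) (q (unpair s).2)) r 0.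

Lemma coord_mcomb m n (p : 'I_m -> elt) (q : 'I_n -> elt) C :
  coord (m * n) (mcomb p q C) = Wmat p q *m \col_s C (unpair s).1 (unpair s).2.
Proof.
rewrite /mcomb coord_sum.
under eq_bigr do rewrite coord_sum.
under eq_bigr do under eq_bigr do rewrite coord_scale'.
rewrite sum_pair; apply/matrixP => r z; rewrite !mxE summxE.
apply: eq_bigr => s _; by rewrite !mxE mulrC.
Qed.

Lemma W_unit m n (p : 'I_m -> elt) (q : 'I_n -> elt) : (0 < m)%N -> (0 < n)%N ->
  coprime m n -> is_Z_basis p -> is_Z_basis q -> Wmat p q \in unitmx.
Proof.
move=> m0 n0 cop Hp Hq.
have [Cf HC] := fin_all_exists (eps_span m0 n0 cop Hp Hq).
have : Wmat p q *m \matrix_(l, r) (\col_s Cf r (unpair s).1 (unpair s).2) l 0 = 1%:M.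
  apply/matrixP => i r; rewrite colmul -coord_mcomb -(coord_eq (HC r)) coord_eps.
  by rewrite !mxE.
by case/mulmx1_unit.
Qed.

Lemma indep m n (p : 'I_m -> elt) (q : 'I_n -> elt) : (0 < m)%N -> (0 < n)%N ->
  coprime m n -> is_Z_basis p -> is_Z_basis q -> forall C C',
  elt_eq (m * n) (mcomb p q C) (mcomb p q C') -> forall i j, C i j = C' i j.
Proof.
move=> m0 n0 cop Hp Hq C C' /coord_eq; rewrite !coord_mcomb => E.
have := congr1 (mulmx (invmx (Wmat p q))) E; rewrite !mulKmx ?W_unit // => E'.
move=> i j; have := congr1 (fun M : 'cV_(m * n) => M (mxvec_index i j) 0) E'.
by rewrite !mxE unpairK.
Qed.

Lemma Im_prod m n x y : (0 < m)%N -> (0 < n)%N -> coprime m n ->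
  inImPsi m x -> inImPsi n y -> inImPsi (m * n) (elt_prod m n x y).
Proof.
move=> m0 n0 cop [P HP] [Q HQ].
have H := mu_congr m0 n0 cop (HP : elt_eq m x (econst P)) (HQ : elt_eq n y (econst Q)).
apply: inIm_congr (ee_sym H) _.
by exists ((P \Po 'X^n) * (Q \Po 'X^m)) => d _; apply: cP_refl.
Qed.

Lemma Im_mn m n (p : 'I_m -> elt) (q : 'I_n -> elt) : (0 < m)%N -> (0 < n)%N ->
  coprime m n -> smith_vector p -> smith_vector q -> forall x, inImPsi (m * n) x ->
  exists C, elt_eq (m * n) x
    (mcomb p q (fun i j => ((elem_div m i)%:Z * (elem_div n j)%:Z) * C i j)).
Proof.
move=> m0 n0 cop Hp Hq x [P HP].
have mn0 : (0 < m * n)%N by rewrite muln_gt0 m0.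
have H (l : 'I_(size P)) : exists D, elt_eq (m * n) (econst 'X^l)
    (mcomb p q (fun i j => ((elem_div m i)%:Z * (elem_div n j)%:Z) * D i j)).
  have [a [b Hab]] := exp_mod l m0 n0 cop.
  have Ha : inImPsi m (econst 'X^a) by exists 'X^a => d _; apply: cP_refl.
  have Hb : inImPsi n (econst 'X^b) by exists 'X^b => d _; apply: cP_refl.
  have [c Hc] := F3 m0 Hp Ha.
  have [g Hg] := F3 n0 Hq Hb.
  exists (fun i j => c i * g j).
  apply: (@ee_trans _ _ (elt_prod m n (econst 'X^a) (econst 'X^b))).
    move=> d dk; rewrite /elt_prod /econst !Xcomp -exprD.
    apply: cP_trans (XnE l mn0 dk) _; rewrite -Hab; apply: cP_sym; exact: XnE.
  apply: ee_trans (mu_congr m0 n0 cop Hc Hg) _; apply: ee_ext => d.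
  rewrite prod_comb; apply: mcomb_ext => i j /=; ring.
have [Df HD] := fin_all_exists H.
exists (fun i j => \sum_(l < size P) P`_l * Df l i j).
apply: ee_trans (HP : elt_eq _ x (econst P)) _.
apply: (@ee_trans _ _ (elt_comb (fun l => P`_l) (fun l : 'I_(size P) => econst 'X^l))).
  by apply: ee_ext => d; rewrite /econst /elt_comb {1}(poly_expand P).
apply: ee_trans (ee_comb _ HD) _; apply: ee_ext => d; rewrite mcomb_lin.
apply: mcomb_ext => i j; rewrite mulr_sumr; apply: eq_bigr => l _; ring.
Qed.

Definition delt m n (i0 : 'I_m) (j0 : 'I_n) (b : int) : 'I_m -> 'I_n -> int :=
  fun i j => if (i == i0) && (j == j0) then b else 0.

Lemma mcomb_delt m n (p : 'I_m -> elt) (q : 'I_n -> elt) i0 j0 b d :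
  mcomb p q (delt i0 j0 b) d = b%:P * elt_prod m n (p i0) (q j0) d.
Proof.
rewrite /mcomb (bigD1 i0) //= [X in _ + X]big1 ?addr0 => [|i ii].
  rewrite (bigD1 j0) //= [X in _ + X]big1 ?addr0 => [|j jj]; first by rewrite /delt !eqxx.
  by rewrite /delt eqxx (negPf jj) polyC0 mul0r.
by rewrite big1 // => j _; rewrite /delt (negPf ii) polyC0 mul0r.
Qed.

Lemma mcombB m n (p : 'I_m -> elt) (q : 'I_n -> elt) C C' d :
  mcomb p q (fun i j => C i j - C' i j) d = mcomb p q C d - mcomb p q C' d.
Proof.
rewrite /mcomb -sumrB; apply: eq_bigr => i _; rewrite -sumrB.
by apply: eq_bigr => j _; rewrite polyCB mulrBl.
Qed.

Lemma prod_scale m n a b x y d :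
  elt_prod m n (elt_scale a x) (elt_scale b y) d = (a * b)%:P * elt_prod m n x y d.
Proof. by rewrite /elt_prod /elt_scale !comp_polyM !comp_polyC polyCM; ring. Qed.

Lemma lemma3p3_aux (m n : nat) (Hm : (0 < m)%N) (Hn : (0 < n)%N)
  (Hmn : coprime m n) (p : 'I_m -> elt) (q : 'I_n -> elt)
  (Hp : smith_vector p) (Hq : smith_vector q) :
  (forall (i : 'I_m) (j : 'I_n),
     has_order_in_G (m * n) (elt_prod m n (p i) (q j))
       (elem_div m i * elem_div n j)) /\
  (forall (i1 i2 : 'I_m) (j1 j2 : 'I_n),
     ~ inImPsi (m * n) (elt_prod m n (p i1) (q j1)) ->
     ~ inImPsi (m * n) (elt_prod m n (p i2) (q j2)) ->
     (cyclic_inter_nontrivial (m * n) (elt_prod m n (p i1) (q j1))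
                                      (elt_prod m n (p i2) (q j2))
      <-> i1 = i2 /\ j1 = j2)).
Proof.
have [Hbp Hsp] := Hp; have [Hbq Hsq] := Hq.
have ordr : forall (i : 'I_m) (j : 'I_n) b, ((elem_div m i * elem_div n j)%:Z %| b)%Z ->
    inImPsi (m * n) (elt_scale b (elt_prod m n (p i) (q j))).
  move=> i j b /dvdzP[t ->].
  have H1 : inImPsi m (elt_scale (t * (elem_div m i)%:Z) (p i)).
    by apply/Hsp; apply: dvdz_mull.
  have H2 : inImPsi n (elt_scale (elem_div n j)%:Z (q j)) by apply/Hsq.
  apply: inIm_congr (Im_prod Hm Hn Hmn H1 H2).
  apply: ee_ext => d; rewrite prod_scale /elt_scale PoszM mulrA.
  by [].
have ordl : forall (i : 'I_m) (j : 'I_n) b, inImPsi (m * n) (elt_scale b (elt_prod m n (p i) (q j))) ->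
    ((elem_div m i * elem_div n j)%:Z %| b)%Z.
  move=> i j b /(Im_mn Hm Hn Hmn Hp Hq) [C HC].
  have HC' : elt_eq (m * n) (mcomb p q (delt i j b))
      (mcomb p q (fun i j => ((elem_div m i)%:Z * (elem_div n j)%:Z) * C i j)).
    apply: ee_trans HC; apply: ee_ext => d; exact: mcomb_delt.
  have := indep Hm Hn Hmn Hbp Hbq HC' i j; rewrite /delt !eqxx /= => ->.
  by rewrite PoszM dvdz_mulr.
split.
  move=> i j b; split; [exact: ordl | exact: ordr].
move=> i1 i2 j1 j2 N1 N2; split.
  case=> a [b [H1 H2]].
  case: (boolP ((i1 == i2) && (j1 == j2))) => [/andP[/eqP-> /eqP->] // | neq].
  exfalso; apply: H2; apply: ordr.
  have [C HC] := Im_mn Hm Hn Hmn Hp Hq H1.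
  have HC' : elt_eq (m * n) (mcomb p q (fun i j => delt i1 j1 a i j - delt i2 j2 b i j))
      (mcomb p q (fun i j => ((elem_div m i)%:Z * (elem_div n j)%:Z) * C i j)).
    apply: ee_trans HC; apply: ee_ext => d.
    by rewrite mcombB !mcomb_delt.
  have := indep Hm Hn Hmn Hbp Hbq HC' i1 j1; rewrite /delt !eqxx /=.
  rewrite [in X in X -> _](negPf neq) subr0 => ->.
  by rewrite PoszM dvdz_mulr.
case=> -> ->; exists 1, 1; split.
  by exists 0 => d _; rewrite /elt_sub subrr; apply: cP_refl.
move=> H; apply: N2; apply: inIm_congr H; apply: ee_ext => d.
by rewrite /elt_scale mul1r.
Qed.

Local Close Scope ring_scope.
Unset Implicit Arguments.

Theorem lemma3p3 (m n : nat) (Hm : (0 < m)%N) (Hn : (0 < n)%N)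
  (Hmn : coprime m n) (p : 'I_m -> elt) (q : 'I_n -> elt)
  (Hp : smith_vector p) (Hq : smith_vector q) :
  (forall (i : 'I_m) (j : 'I_n),
     has_order_in_G (m * n) (elt_prod m n (p i) (q j))
       (elem_div m i * elem_div n j)) /\
  (forall (i1 i2 : 'I_m) (j1 j2 : 'I_n),
     ~ inImPsi (m * n) (elt_prod m n (p i1) (q j1)) ->
     ~ inImPsi (m * n) (elt_prod m n (p i2) (q j2)) ->
     (cyclic_inter_nontrivial (m * n) (elt_prod m n (p i1) (q j1))
                                      (elt_prod m n (p i2) (q j2))
      <-> i1 = i2 /\ j1 = j2)).
Proof. exact: (lemma3p3_aux Hm Hn Hmn Hp Hq). Qed.
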